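(* Let $P$ be a finite poset and $k\in\mathbb{N}$, and let $\mathcal{A}_k(P)$ be the set of antichains of $P$ of cardinality $k$. For $A,B\in\mathcal{A}_k(P)$ write $A\prec_k B$ if $A\setminus B=\{a\}$ and $B\setminus A=\{b\}$ are singletons with $a<_P b$, and let $\le_k$ be the reflexive transitive closure of $\prec_k$. Also let $\le_J$ be the relation on antichains given by $A\le_J B$ iff for every $a\in A$ there is $b\in B$ with $a\le_P b$. Then: (i) $\le_k$ is a partial order on $\mathcal{A}_k(P)$; (ii) the restriction of $\le_J$ to $\mathcal{A}_k(P)$ refines $\le_k$, i.e. $A\le_k B$ implies $A\le_J B$; (iii) if $A\le_k B$, then the elements of $A$ and $B$ can be labelled $A=\{a_1,\dots,a_k\}$, $B=\{b_1,\dots,b_k\}$ so that $a_i\le_P b_i$ for all $1\le i\le k$; (iv) $B$ covers $A$ in $(\mathcal{A}_k(P),\le_k)$ if and only if $A\prec_k B$ and the unique elements $a\in A\setminus B$ and $b\in B\setminus A$ satisfy $a\lessdot_P b$ (i.e. $b$ covers $a$ in $P$).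
   Context: An antichain is a set of pairwise incomparable elements. The relation $\le_J$ is the order on antichains induced from inclusion of the order ideals they generate. *)

(* Defs.v *)
From HB Require Import structures.
From mathcomp Require Import all_boot all_order.
Set Implicit Arguments. Unset Strict Implicit. Unset Printing Implicit Defensive.
Import Order.Theory.
Local Open Scope order_scope.

Section Antichains.
Context {disp : Order.disp_t} {T : finPOrderType disp}.

Definition antichain (A : {set T}) : bool :=
  [forall x in A, forall y in A, (x != y) ==> ~~ (x >=< y)].

Definition antichain_k (k : nat) (A : {set T}) : bool :=
  antichain A && (#|A| == k).

Definition prec_k (k : nat) (A B : {set T}) : bool :=
  [&& antichain_k k A, antichain_k k B &
   [exists a : T, exists b : T,
      [&& A :\: B == [set a], B :\: A == [set b] & a < b]]].

Definition le_k (k : nat) (A B : {set T}) : bool := connect (prec_k k) A B.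

Definition le_J (A B : {set T}) : bool :=
  [forall a in A, exists b in B, a <= b].

Definition covers_P (a b : T) : bool :=
  (a < b) && [forall c : T, ~~ ((a < c) && (c < b))].

Definition covers_k (k : nat) (A B : {set T}) : bool :=
  [&& antichain_k k A, antichain_k k B, le_k k A B, A != B &
   [forall C : {set T},
      ~~ [&& antichain_k k C, le_k k A C, le_k k C B, C != A & C != B]]].

End Antichains.

(* Main.v *)
Require Import Defs.
From HB Require Import structures.
From mathcomp Require Import all_boot all_order.
Import Order.Theory.
Local Open Scope order_scope.

Section Aux.
Context {disp : Order.disp_t} {T : finPOrderType disp}.
Implicit Types (A B C S : {set T}) (a b c x y : T).

Lemma antichainP A :
  reflect {in A &, forall x y, x <= y -> x = y} (antichain A).
Proof.
apply: (iffP forall_inP) => [H x y xA yA le_xy | H x xA].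
  move/forall_inP/(_ y yA): (H x xA).
  by case: eqVneq => // _; rewrite /Order.comparable le_xy.
apply/forall_inP => y yA; apply/implyP => nxy.
rewrite /Order.comparable; apply/negP => /orP [] le.
  by move: nxy; rewrite (H x y xA yA le) eqxx.
by move: nxy; rewrite (H y x yA xA le) eqxx.
Qed.

Lemma diffU1 S u v : u \notin S -> u != v -> (u |: S) :\: (v |: S) = [set u].
Proof.
move=> uS uv; apply/setP => t; rewrite !inE.
case: (eqVneq t u) => [->|tu] /=; first by rewrite (negbTE uS) (negbTE uv).
by case: (t \in S); rewrite ?orbT ?andbF ?andbT.
Qed.

Lemma decomp A B a : A :\: B = [set a] -> A = a |: (A :&: B) /\ a \notin A :&: B.
Proof.
move=> H; have Ha : A :\: B =i [set a] by apply/setP. split.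
  apply/setP => t; move: (Ha t); rewrite !inE => <-.
  by case: (t \in A); case: (t \in B).
move: (Ha a); rewrite !inE eqxx. case: (a \in B); case: (a \in A) => //.
Qed.

Lemma precE k A B : prec_k k A B ->
  exists S a b, [/\ A = a |: S, B = b |: S, a \notin S, b \notin S &
     [/\ a < b, antichain_k k A, antichain_k k B,
         A :\: B = [set a] & B :\: A = [set b]]].
Proof.
case/and3P => hA hB /existsP [a /existsP [b /and3P [/eqP e1 /eqP e2 ab]]].
have [dA nA] := decomp _ _ _ e1; have [dB nB] := decomp _ _ _ e2.
rewrite setIC in dB nB.
by exists (A :&: B), a, b.
Qed.

Lemma prec_intro k S a b : antichain_k k (a |: S) -> antichain_k k (b |: S) ->
  a \notin S -> b \notin S -> a < b -> prec_k k (a |: S) (b |: S).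
Proof.
move=> hA hB aS bS ab; rewrite /prec_k hA hB; apply/existsP; exists a; apply/existsP; exists b.
have nab : a != b by rewrite lt_neqAle in ab; case/andP: ab.
by rewrite !diffU1 // ?eqxx ?ab // eq_sym.
Qed.

Definition phi A := (\sum_(x in A) #|[set y : T | (y < x)%O]|)%N.

Lemma phi_lt k A B : prec_k k A B -> (phi A < phi B)%N.
Proof.
case/precE => S [a [b [-> -> aS bS [ab _ _ _ _]]]].
rewrite /phi !big_setU1 //= ltn_add2r; apply: proper_card.
apply/properP; split.
  by apply/subsetP => y; rewrite !inE => ya; apply: lt_trans ya ab.
by exists a; rewrite !inE ?ab ?ltxx.
Qed.

Lemma prec_neq k A B : prec_k k A B -> A != B.
Proof. by move/phi_lt; case: eqVneq => // ->; rewrite ltnn. Qed.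

End Aux.

Lemma connect_rect (U : finType) (e : rel U) (P : U -> U -> Prop) :
  (forall x, P x x) -> (forall x y z, e x y -> connect e y z -> P y z -> P x z) ->
  forall x y, connect e x y -> P x y.
Proof.
move=> H0 HS x y /connectP [p]; elim: p x => [|z p IH] x /=; first by move=> _ ->.
case/andP => exz pz ey; apply: (HS x z) => //; last exact: IH.
by apply/connectP; exists p.
Qed.

Arguments precE {disp T k A B}.
Arguments prec_neq {disp T k A B}.
Arguments phi_lt {disp T k A B}.
Arguments decomp {disp T A B a}.

Section Main.
Context {disp : Order.disp_t} {T : finPOrderType disp}.
Implicit Types (A B C S : {set T}) (a b c x y : T).

Lemma le_k_phi k A B : le_k k A B -> A = B \/ (phi A < phi B)%N.
Proof.
move: A B; apply: connect_rect => [x|x y z pxy _ [<-|lt]]; first by left.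
  by right; apply: phi_lt pxy.
by right; apply: ltn_trans lt; apply: phi_lt pxy.
Qed.

Lemma le_J_trans A B C : le_J A B -> le_J B C -> le_J A C.
Proof.
move=> /forall_inP h1 /forall_inP h2; apply/forall_inP => x xA.
have /exists_inP [y yB xy] := h1 x xA.
have /exists_inP [z zC yz] := h2 y yB.
by apply/exists_inP; exists z => //; apply: le_trans yz.
Qed.

Lemma le_k_J k A B : le_k k A B -> le_J A B.
Proof.
move: A B; apply: connect_rect => [x|x y z pxy _ h].
  by apply/forall_inP => t tx; apply/exists_inP; exists t.
apply: le_J_trans h.
case/precE: pxy => S [a [b [-> -> aS bS [ab _ _ _ _]]]].
apply/forall_inP => t; rewrite in_setU1; case/orP => [/eqP ->|tS].
  by apply/exists_inP; exists b; rewrite ?setU11 ?ltW.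
by apply/exists_inP; exists t; rewrite ?in_setU1 ?tS ?orbT.
Qed.

Lemma le_k_match k A B : le_k k A B -> #|A| = k ->
      exists (f g : 'I_k -> T),
        [/\ injective f, injective g, A = [set f i | i : 'I_k],
            B = [set g i | i : 'I_k] & forall i, f i <= g i].
Proof.
move: A B; apply: connect_rect => [x|x y z pxy _ IH] Hk.
  pose f (i : 'I_k) := enum_val (cast_ord (esym Hk) i).
  have finj : injective f by move=> i j /enum_val_inj /cast_ord_inj.
  have fx : x = [set f i | i : 'I_k].
    apply/setP => t; apply/idP/imsetP => [tx|[i _ ->]]; last exact: enum_valP.
    exists (cast_ord Hk (enum_rank_in tx t)) => //.
    by rewrite /f cast_ordK enum_rankK_in.
  by exists f, f; split.
case/precE: pxy => S [a [b [ex ey aS bS [ab _ /andP[_ /eqP hy] _ _]]]].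
have [f [g [finj ginj fy gz fg]]] := IH hy.
pose f' i := if f i == b then a else f i.
have ay : a \notin y by rewrite ey in_setU1 negb_or aS andbT (lt_eqF ab).
have fyi i : f i \in y by rewrite fy imset_f.
exists f', g; split => //.
- move=> i j; rewrite /f'; case: eqVneq => fi; case: eqVneq => fj.
  + by move=> _; apply: finj; rewrite fi fj.
  + by move=> ea; move: (fyi j); rewrite -ea (negbTE ay).
  + by move=> ea; move: (fyi i); rewrite ea (negbTE ay).
  + exact: finj.
- apply/setP => t; rewrite ex in_setU1; apply/idP/imsetP.
  + case/orP => [/eqP ->|tS].
      have : b \in y by rewrite ey setU11.
      rewrite fy => /imsetP [i _ bi]; exists i => //.
      by rewrite /f' -bi eqxx.
    have : t \in y by rewrite ey in_setU1 tS orbT.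
    rewrite fy => /imsetP [i _ ti]; exists i => //.
    rewrite /f' -ti; case: eqVneq => // tb; by move: bS; rewrite -tb tS.
  + case=> i _ ->; rewrite /f'; case: (eqVneq (f i) b) => [_|fb]; first by rewrite eqxx.
    by move: (fyi i); rewrite ey in_setU1 (negbTE fb) /= => ->; rewrite orbT.
- move=> i; rewrite /f'; case: eqVneq => [fb|_]; last exact: fg.
  by apply: le_trans (fg i); rewrite fb ltW.
Qed.

End Main.

Section Cov.
Context {disp : Order.disp_t} {T : finPOrderType disp}.
Implicit Types (A B C S : {set T}) (a b c x y : T).

Lemma covers_prec k A B : covers_k k A B -> prec_k k A B.
Proof.
case/and5P => hA hB le nAB /forallP H.
move/connectP: le => [[|A1 p]] /=; first by move=> _ eB; move: nAB; rewrite eB eqxx.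
case/andP => pA1 pp eB.
have le1 : le_k k A1 B by apply/connectP; exists p.
case: (eqVneq A1 B) => [<- //|n1].
have [S [a [b [_ _ _ _ [_ _ h1 _ _]]]]] := precE pA1.
have l0 : le_k k A A1 := connect1 pA1.
move: (H A1); rewrite h1 l0 le1 n1 andbT /=.
by rewrite eq_sym (prec_neq pA1).
Qed.

Lemma covers_iff k A B : antichain_k k A -> antichain_k k B ->
      (covers_k k A B <->
      (prec_k k A B /\
       exists a b : T, [/\ A :\: B = [set a], B :\: A = [set b] & covers_P a b])).
Proof.
move=> _ _; split.
  move=> cov; have pAB := covers_prec _ _ _ cov; split => //.
  case/and5P: cov => _ _ _ _ /forallP H.
  have [S [a [b [eA eB aS bS [ab hA hB e1 e2]]]]] := precE pAB.
  exists a, b; split => //; rewrite /covers_P ab /=.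
  apply/forallP => c; apply/negP => /andP [ac cb].
  move: hA hB H; rewrite eA eB => hA hB H.
  have /antichainP antA := (proj1 (andP hA)).
  have /antichainP antB := (proj1 (andP hB)).
  have cS : c \notin S.
    apply/negP => cS; have := antA a c (setU11 _ _) (setU1r _ cS) (ltW ac).
    by move=> ea; move: ac; rewrite ea ltxx.
  have hC : antichain_k k (c |: S).
    rewrite /antichain_k cardsU1 cS; move: hA; rewrite /antichain_k cardsU1 aS => /andP [_ ->].
    rewrite andbT; apply/antichainP => x y; rewrite !in_setU1.
    case/orP => [/eqP->|xS]; case/orP => [/eqP->|yS] le //.
    - have := antA a y (setU11 _ _) (setU1r _ yS) (ltW (lt_le_trans ac le)).
      by move=> ea; move: aS; rewrite ea yS.
    - have := antB x b (setU1r _ xS) (setU11 _ _) (ltW (le_lt_trans le cb)).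
      by move=> ea; move: bS; rewrite -ea xS.
    - by apply: antA; rewrite ?setU1r.
  have p1 : prec_k k (a |: S) (c |: S) by apply: prec_intro.
  have p2 : prec_k k (c |: S) (b |: S) by apply: prec_intro.
  have l1 : le_k k (a |: S) (c |: S) := connect1 p1.
  have l2 : le_k k (c |: S) (b |: S) := connect1 p2.
  move: (H (c |: S)); rewrite hC l1 l2 (prec_neq p2) andbT /=.
  by rewrite eq_sym (prec_neq p1).
case=> pAB [a' [b' [h1 h2 cov]]].
have [S [a [b [eA eB aS bS [ab hA hB e1 e2]]]]] := precE pAB.
move: h1 h2; rewrite e1 e2 => /set1_inj ea /set1_inj eb; subst a' b'.
have lAB : le_k k A B := connect1 pAB.
rewrite /covers_k hA hB lAB (prec_neq pAB) /=.
apply/forallP => C; apply/negP => /and5P [hC lAC lCB nCA nCB].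
have /forall_inP J1 := le_k_J _ _ _ lAC.
have /forall_inP J2 := le_k_J _ _ _ lCB.
move: hA hB J1 J2 nCA nCB; rewrite eA eB => hA hB J1 J2 nCA nCB.
have /antichainP antA := (proj1 (andP hA)).
have /antichainP antB := (proj1 (andP hB)).
have SC : {subset S <= C}.
  move=> s sS; have /exists_inP [c cC sc] := J1 s (setU1r _ sS).
  have /exists_inP [y yB cy] := J2 c cC.
  have sy := antB s y (setU1r _ sS) yB (le_trans sc cy).
  by move: cy; rewrite -sy => cs; rewrite (@le_anti _ _ s c) ?sc ?cs.
have cardC : #|C| = #|S|.+1.
  move: hA hC; rewrite /antichain_k cardsU1 aS => /andP [_ /eqP <-] /andP [_ /eqP ->].
  by [].
have /subsetPn [c cC cS] : ~~ (C \subset S).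
  by apply/negP => /subset_leq_card; rewrite cardC ltnn.
have eC : C = c |: S.
  apply/eqP; rewrite eq_sym eqEcard cardsU1 cS cardC leqnn andbT.
  by apply/subsetP => t; rewrite in_setU1 => /orP [/eqP ->|/SC].
rewrite eC in J1 J2 nCA nCB.
have ac : a <= c.
  have /exists_inP [x] := J1 a (setU11 _ _).
  rewrite in_setU1 => /orP [/eqP -> //|xS] ax.
  by have := antA a x (setU11 _ _) (setU1r _ xS) ax => ea; move: aS; rewrite ea xS.
have cb : c <= b.
  have /exists_inP [y] := J2 c (setU11 _ _).
  rewrite in_setU1 => /orP [/eqP -> //|yS] cy.
  have := antA a y (setU11 _ _) (setU1r _ yS) (le_trans ac cy).
  by move=> ea; move: aS; rewrite ea yS.
case/andP: cov => _ /forallP /(_ c).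
rewrite !lt_neqAle ac cb !andbT.
case: (eqVneq a c) => [eac|_] /=; first by move: nCA; rewrite eac eqxx.
by case: (eqVneq c b) => [ecb|_] //; move: nCB; rewrite ecb eqxx.
Qed.

End Cov.

Theorem proposition2p2 (disp : Order.disp_t) (T : finPOrderType disp) (k : nat) :
  (* (i) le_k is a partial order on A_k(P) *)
  ((forall A : {set T}, antichain_k k A -> le_k k A A) /\
   (forall A B C : {set T}, antichain_k k A -> antichain_k k B -> antichain_k k C ->
      le_k k A B -> le_k k B C -> le_k k A C) /\
   (forall A B : {set T}, antichain_k k A -> antichain_k k B ->
      le_k k A B -> le_k k B A -> A = B)) /\
  (* (ii) le_J refines le_k *)
  (forall A B : {set T}, antichain_k k A -> antichain_k k B ->
      le_k k A B -> le_J A B) /\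
  (* (iii) matching labelling *)
  (forall A B : {set T}, antichain_k k A -> antichain_k k B -> le_k k A B ->
      exists (f g : 'I_k -> T),
        [/\ injective f, injective g, A = [set f i | i : 'I_k],
            B = [set g i | i : 'I_k] & forall i, f i <= g i]) /\
  (* (iv) characterization of covers *)
  (forall A B : {set T}, antichain_k k A -> antichain_k k B ->
      (covers_k k A B <->
      (prec_k k A B /\
       exists a b : T, [/\ A :\: B = [set a], B :\: A = [set b] & covers_P a b]))).
Proof.
split; [split; [|split]|split; [|split]].
- by move=> A _; apply: connect0.
- by move=> A B C _ _ _; apply: connect_trans.
- move=> A B _ _ h1 h2.
  case: (le_k_phi _ _ _ h1) => // l1; case: (le_k_phi _ _ _ h2) => // l2.
  by move: (ltn_trans l1 l2); rewrite ltnn.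
- by move=> A B _ _; apply: le_k_J.
- by move=> A B /andP [_ /eqP hA] _ h; apply: le_k_match h hA.
- exact: covers_iff.
Qed.
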